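(* Let $G$ be a finite group of nilpotency class at most $2$. Let $e=\exp(G)$, $e'=\exp([G,G])$ and $f=\exp(G/Z(G))$. Then $$W:=\{x^m[x,y^n]\in F_2:\ m\mid e,\ n\mid f,\ n\le e'\}$$ is a $2$-exhaustive set for word images on $G$; that is, for every $v\in F_2$ there exists $w\in W$ with $v(G)=w(G)$.
   Context: $[a,b]=aba^{-1}b^{-1}$; $x,y$ are the free generators of $F_2$; for $w\in F_2$, $w(G)=\{w(a,b):a,b\in G\}$. Nilpotency class at most 2 means $[G,G]\subseteq Z(G)$. A subset $W\subseteq F_d$ is a $d$-exhaustive set for word images on $G$ if for every $v\in F_d$ there is $w\in W$ with $v(G)=w(G)$. *)

(* Defs.v *)
From HB Require Import structures.
From mathcomp Require Import all_boot all_fingroup all_solvable.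
Set Implicit Arguments. Unset Strict Implicit. Unset Printing Implicit Defensive.
Local Open Scope group_scope.

(* Words in the free group F_2 on generators x, y, represented as group terms.
   Every element of F_2 is the value of such a term, and evaluation at (a,b)
   factors through F_2, so word images are well defined on F_2. *)
Inductive word2 : Type :=
  | WX : word2
  | WY : word2
  | W1 : word2
  | WMul : word2 -> word2 -> word2
  | WInv : word2 -> word2.

Fixpoint weval (gT : finGroupType) (a b : gT) (w : word2) : gT :=
  match w with
  | WX => a
  | WY => b
  | W1 => 1
  | WMul u v => weval a b u * weval a b v
  | WInv u => (weval a b u)^-1
  end.

Definition wpow (w : word2) (n : nat) : word2 := iter n (WMul w) W1.

(* paper's commutator convention [u,v] = u v u^-1 v^-1 *)
Definition wcomm (u v : word2) : word2 :=
  WMul (WMul u v) (WMul (WInv u) (WInv v)).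

Definition wW (m n : nat) : word2 := WMul (wpow WX m) (wcomm WX (wpow WY n)).

Definition word_image (gT : finGroupType) (G : {set gT}) (w : word2) : {set gT} :=
  [set weval a b w | a in G, b in G].

(* Main.v *)
Require Import Defs.
From mathcomp Require Import all_boot all_fingroup all_solvable.
From mathcomp Require Import zify.
Set Implicit Arguments. Unset Strict Implicit. Unset Printing Implicit Defensive.
Local Open Scope group_scope.

Section Class2.
Variables (gT : finGroupType) (G : {group gT}).
Hypothesis cG : [~: G, G] \subset 'Z(G).

Let e := exponent G.
Let k := e.-1.
Lemma eS : e = k.+1.
Proof. by rewrite /k prednK // exponent_gt0. Qed.

Lemma commZ x y : x \in G -> y \in G -> [~ x, y] \in 'Z(G).
Proof. by move=> xG yG; apply: (subsetP cG); apply: mem_commg. Qed.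

Lemma commC x y z : x \in G -> y \in G -> z \in G -> commute z [~ x, y].
Proof. by move=> xG yG zG; apply: (centerC zG); apply: commZ. Qed.

Lemma commXX x y i j : x \in G -> y \in G -> [~ x ^+ i, y ^+ j] = [~ x, y] ^+ (i * j).
Proof. by move=> xG yG; apply: commXXg; apply: commC. Qed.

Lemma pow_e x n : x \in G -> x ^+ (e * n) = 1.
Proof. by move=> xG; rewrite expgM expg_exponent // expg1n. Qed.

Lemma commV x y : x \in G -> y \in G -> [~ y, x] = [~ x, y] ^+ k.
Proof.
move=> xG yG; rewrite -invg_comm; apply/eqP; rewrite eq_invg_mul -expgS -eS.
by rewrite -(muln1 e) pow_e // groupR.
Qed.

Definition coll (a b : gT) (t : nat * nat * nat) :=
  a ^+ t.1.1 * b ^+ t.1.2 * [~ a, b] ^+ t.2.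

Lemma coll_e a b x y z p q r : a \in G -> b \in G ->
  coll a b (x + e * p, y + e * q, z + e * r) = coll a b (x, y, z).
Proof.
move=> aG bG; rewrite /coll /= !expgD !pow_e ?groupR // !mulg1 //.
Qed.

Lemma centr z x : z \in 'Z(G) -> x \in G -> z * x = x * z.
Proof. by move=> zZ xG; rewrite (centerC xG zZ). Qed.

Lemma commXV a b i j : a \in G -> b \in G ->
  [~ b ^+ i, a ^+ j] = [~ a, b] ^+ (k * (i * j)).
Proof. move=> aG bG. rewrite (commXX _ _ bG aG). by rewrite (commV aG bG) -expgM. Qed.

Lemma coll_mul a b x y z x' y' z' : a \in G -> b \in G ->
  coll a b (x, y, z) * coll a b (x', y', z') =
  coll a b (x + x', y + y', z + z' + k * (y * x')).
Proof.
move=> aG bG; rewrite /coll /= !expgD -commXV //.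
have zZ n : [~ a, b] ^+ n \in 'Z(G) by apply: groupX; apply: commZ.
have dZ : [~ b ^+ y, a ^+ x'] \in 'Z(G) by apply: commZ; apply: groupX.
set A := a ^+ x; set B := b ^+ y; set A' := a ^+ x'; set B' := b ^+ y'.
set C := [~ a, b] ^+ z; set C' := [~ a, b] ^+ z'.
have [D eqD] : {D | D = [~ B, A']} by exists [~ B, A'].
rewrite -eqD; rewrite -eqD in dZ.
have AG : A' \in G by apply: groupX.
have BG : B' \in G by apply: groupX.
have CG : C' \in G by exact: (subsetP (center_sub G) _ (zZ z')).
have e1 : C * (A' * B' * C') = A' * B' * C' * C.
  by rewrite (centr (zZ z)) // !groupM.
rewrite -[A * B * C * _]mulgA e1 !mulgA -[A * B * A']mulgA (commgC B A') -eqD.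
rewrite !mulgA -[A * A' * B * D * B']mulgA (centr dZ BG) !mulgA.
rewrite -!mulgA; do 4! congr (_ * _).
have CG0 : C \in G by exact: (subsetP (center_sub G) _ (zZ z)).
rewrite mulgA (centr dZ CG) -mulgA (centr dZ CG0) mulgA.
by rewrite mulgA (centr (zZ z') CG0).
Qed.

Lemma coll1 a b : a \in G -> b \in G -> coll a b (0, 0, 0) = 1.
Proof. by move=> *; rewrite /coll !expg0 !mulg1. Qed.

Lemma coll_inv a b x y z : a \in G -> b \in G ->
  (coll a b (x, y, z))^-1 = coll a b (k * x, k * y, k * (z + x * y))%N.
Proof.
move=> aG bG; apply/eqP; rewrite eq_invg_mul coll_mul //.
rewrite -(coll1 aG bG) -(coll_e 0 0 0 x y (z + k * x * y)%N aG bG) !add0n.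
have -> : (x + k * x = e * x)%N by rewrite eS; nia.
have -> : (y + k * y = e * y)%N by rewrite eS; nia.
have -> : (z + k * (z + x * y) + k * (y * (k * x)) = e * (z + k * x * y))%N
  by rewrite eS; nia.
by [].
Qed.

Lemma coll_word v : exists t, forall a b, a \in G -> b \in G ->
  weval a b v = coll a b t.
Proof.
elim: v => [| | | u [t1 IH1] w [t2 IH2] | u [t IH]].
- by exists (1, 0, 0)%N => a b aG bG; rewrite /coll !expg0 !mulg1 expg1.
- by exists (0, 1, 0)%N => a b aG bG; rewrite /coll !expg0 !mulg1 mul1g expg1.
- by exists (0, 0, 0)%N => a b aG bG; rewrite coll1.
- case: t1 IH1 => [[x y] z] IH1; case: t2 IH2 => [[x' y'] z'] IH2.
  exists (x + x', y + y', z + z' + k * (y * x'))%N => a b aG bG.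
  by rewrite /= IH1 // IH2 // coll_mul.
- case: t IH => [[x y] z] IH.
  exists (k * x, k * y, k * (z + x * y))%N => a b aG bG.
  by rewrite /= IH // coll_inv.
Qed.


Lemma conjZ z x : z \in 'Z(G) -> x \in G -> z ^ x = z.
Proof. by move=> zZ xG; rewrite /conjg (centr zZ xG) mulKg. Qed.

Lemma commXV1 a b i : a \in G -> b \in G -> [~ b ^+ i, a] = [~ a, b] ^+ (k * i).
Proof. by move=> aG bG; have := commXV i 1 aG bG; rewrite expg1 muln1. Qed.

Lemma shear1 a b j x y z : a \in G -> b \in G ->
  coll (a * b ^+ j) b (x, y, z) = coll a b (x, j * x + y, k * (j * 'C(x, 2)) + z)%N.
Proof.
move=> aG bG.
have bjG : b ^+ j \in G by apply: groupX.
transitivity (coll a b (x, 0, 0)%N * coll a b (0, j * x, 0)%N * coll a b (0, 0, k * (j * 'C(x, 2)))%N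
   * coll a b (0, y, 0)%N * coll a b (0, 0, z)%N).
  rewrite /coll /= !expg0 !mulg1 !mul1g.
  rewrite (expMg_Rmul x (commC bjG aG bjG) (commC bjG aG aG)) -expgM commXV1 // -expgM mulnA.
  rewrite commMgJ conjZ ?commZ // -(invg_comm b (b ^+ j)) commgXg invg1 mulg1.
  by rewrite -!mulgA.
rewrite !coll_mul //; congr (coll a b (_, _, _)); nia.
Qed.

Lemma shear2 a b j x y z : a \in G -> b \in G ->
  coll a (b * a ^+ j) (x, y, z) =
  coll a b (x + j * y, y, k * (y * (j * y)) + j * 'C(y, 2) + z)%N.
Proof.
move=> aG bG.
have ajG : a ^+ j \in G by apply: groupX.
transitivity (coll a b (x, 0, 0)%N * coll a b (0, y, 0)%N * coll a b (j * y, 0, 0)%N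
   * coll a b (0, 0, j * 'C(y, 2))%N * coll a b (0, 0, z)%N).
  rewrite /coll /= !expg0 !mulg1 !mul1g.
  rewrite (expMg_Rmul y (commC ajG bG ajG) (commC ajG bG bG)) -expgM.
  have -> : [~ a ^+ j, b] = [~ a, b] ^+ j by rewrite (commXg j (commC aG bG aG)).
  rewrite -expgM commgMJ conjZ ?commZ // commgXg mul1g mulnC.
  by rewrite -!mulgA.
rewrite !coll_mul //; congr (coll a b (_, _, _)); nia.
Qed.


Definition T (t : nat * nat * nat) := [set coll a b t | a in G, b in G].

Lemma coll_mod a b x y z : a \in G -> b \in G ->
  coll a b (x, y, z) = coll a b (x %% e, y %% e, z %% e).
Proof.
move=> aG bG; rewrite /coll /= !expg_mod ?expg_exponent ?groupR //.
Qed.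

Lemma T_mod x1 y1 z1 x2 y2 z2 :
  x1 %% e = x2 %% e -> y1 %% e = y2 %% e -> z1 %% e = z2 %% e ->
  T (x1, y1, z1) = T (x2, y2, z2).
Proof.
move=> ex ey ez; apply: eq_in_imset2 => a b aG bG.
by rewrite coll_mod // ex ey ez -coll_mod.
Qed.

Lemma T_shear1 j x y z : T (x, j * x + y, k * (j * 'C(x, 2)) + z)%N = T (x, y, z).
Proof.
apply/setP => g; apply/imset2P/imset2P => -[a b aG bG ->].
  by exists (a * b ^+ j) b; rewrite ?shear1 // groupM ?groupX.
exists (a * (b ^+ j)^-1) b => //; first by rewrite groupM ?groupV ?groupX.
by rewrite -shear1 ?mulgKV // groupM ?groupV ?groupX.
Qed.

Lemma T_shear2 j x y z :
  T (x + j * y, y, k * (y * (j * y)) + j * 'C(y, 2) + z)%N = T (x, y, z).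
Proof.
apply/setP => g; apply/imset2P/imset2P => -[a b aG bG ->].
  by exists a (b * a ^+ j); rewrite ?shear2 // groupM ?groupX.
exists a (b * (a ^+ j)^-1) => //; first by rewrite groupM ?groupV ?groupX.
by rewrite -shear2 ?mulgKV // groupM ?groupV ?groupX.
Qed.

Lemma euclid n x y z : (x + y <= n)%N -> exists z', T (x, y, z) = T (gcdn x y, 0, z').
Proof.
elim: n x y z => [|n IH] x y z hn.
  have -> : x = 0 by lia.
  have -> : y = 0 by lia.
  by exists z.
case: (posnP y) => [-> | y0]; first by exists z; rewrite gcdn0.
case: (posnP x) => [x0 | x0].
  subst x; rewrite gcd0n.
  rewrite -(T_shear2 1) add0n mul1n -(T_shear1 k).
  eexists; apply: T_mod; [done | | done].
  have -> : (k * y + y = y * e)%N by rewrite eS; nia.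
  by rewrite modnMl mod0n.
case: (leqP x y) => hxy.
  rewrite -(T_shear1 k).
  have -> : T (x, k * x + y, k * (k * 'C(x, 2)) + z)%N = T (x, y - x, k * (k * 'C(x, 2)) + z)%N.
    apply: T_mod => //.
    have -> : (k * x + y = x * e + (y - x))%N by rewrite eS; nia.
    by rewrite modnMDl.
  have [z' ->] := IH x (y - x) (k * (k * 'C(x, 2)) + z)%N ltac:(lia).
  have -> : gcdn x (y - x) = gcdn x y.
    by rewrite -gcdnDl subnKC.
  by exists z'.
rewrite -(T_shear2 k).
have -> : T (x + k * y, y, k * (y * (k * y)) + k * 'C(y, 2) + z)%N
    = T (x - y, y, k * (y * (k * y)) + k * 'C(y, 2) + z)%N.
  apply: T_mod => //.
  have -> : (x + k * y = y * e + (x - y))%N by rewrite eS; nia.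
  by rewrite modnMDl.
have [z' ->] := IH (x - y) y (k * (y * (k * y)) + k * 'C(y, 2) + z)%N ltac:(lia).
have -> : gcdn (x - y) y = gcdn x y.
  by rewrite gcdnC -gcdnDl subnKC 1?gcdnC // ltnW.
by exists z'.
Qed.

Lemma commgXn a b i : a \in G -> b \in G -> [~ a, b ^+ i] = [~ a, b] ^+ i.
Proof. by move=> aG bG; rewrite (commgX i (commC aG bG bG)). Qed.

Lemma T_comm m z : T (m, 0, z) = T (m, 0, gcdn z (exponent [~: G, G])).
Proof.
set e' := exponent [~: G, G].
case: (posnP z) => [-> | z0].
  rewrite gcd0n; apply: eq_in_imset2 => a b aG bG.
  by rewrite /coll /= expg_exponent ?expg0 // mem_commg.
set n := gcdn z e'.
have [km kn Hk _] := egcdnP e' z0.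
apply/setP => g; apply/imset2P/imset2P => -[a b aG bG ->].
  exists a (b ^+ (z %/ n)); rewrite ?groupX //.
  rewrite /coll /= !expg0 commgXn // -expgM divnK //.
  exact: dvdn_gcdl.
exists a (b ^+ km); rewrite ?groupX //.
rewrite /coll /= !expg0 commgXn // -expgM Hk expgD mulnC expgM.
by rewrite expg_exponent ?expg1n ?mul1g // mem_commg.
Qed.

Lemma comm_exp_dvd : exponent [~: G, G] %| exponent (G / 'Z(G)).
Proof.
have ab : abelian (commg_set G G).
  apply: abelianS (center_abelian G).
  by apply: subset_trans cG; apply: subset_gen.
rewrite /commutator abelian_exponent_gen //.
apply/exponentP => w /imset2P [x y xG yG ->].
set f := exponent (G / 'Z(G)).
have yN : y \in 'N('Z(G)) by apply: (subsetP (normal_norm (center_normal G))).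
have yfZ : y ^+ f \in 'Z(G).
  apply: coset_idr; first by apply: groupX.
  by rewrite morphX // expg_exponent // mem_quotient.
rewrite -commgXn //; apply/eqP/commgP.
by rewrite /commute (centr yfZ xG).
Qed.

End Class2.

Lemma weval_pow (gT : finGroupType) (a b : gT) w n :
  weval a b (wpow w n) = weval a b w ^+ n.
Proof. by elim: n => [|n IH] //=; rewrite IH expgS. Qed.

Lemma comm_paper (gT : finGroupType) (G : {group gT}) x y :
  [~: G, G] \subset 'Z(G) -> x \in G -> y \in G ->
  x * y * (x^-1 * y^-1) = [~ x, y].
Proof.
move=> cG xG yG; rewrite (commgC x y) -mulgA.
rewrite (centr (commZ cG xG yG)) ?groupM ?groupV //.
rewrite !mulgA mulgK mulgV mul1g. by rewrite commgEl /conjg !mulgA.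
Qed.

Theorem theorem3p7 (gT : finGroupType) (G : {group gT}) :
  ([~: G, G] \subset 'Z(G))%g ->
  forall v : word2,
    exists m n : nat,
      [/\ m %| exponent G, n %| exponent (G / 'Z(G))%g,
          n <= exponent [~: G, G]%g
        & word_image G v = word_image G (wW m n)].
Proof.
move=> cG v.
have [[[x y] z] Hv] := coll_word cG v.
have Ev : word_image G v = T G (x, y, z).
  by rewrite /word_image /T; apply: eq_in_imset2 => a b aG bG; exact: Hv.
have [z1 E1] := euclid cG z (leqnn (x + y)).
have E2 : T G (gcdn x y, 0, z1) = T G (gcdn x y, exponent G, z1).
  by apply: T_mod; rewrite ?modnn ?mod0n.
have [z2 E3] := euclid cG z1 (leqnn (gcdn x y + exponent G)).
exists (gcdn (gcdn x y) (exponent G)), (gcdn z2 (exponent [~: G, G])).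
split.
- exact: dvdn_gcdr.
- exact: dvdn_trans (dvdn_gcdr _ _) (comm_exp_dvd cG).
- exact: dvdn_leq (exponent_gt0 _) (dvdn_gcdr _ _).
rewrite Ev E1 E2 E3 (T_comm cG) /T /word_image.
have P a b : a \in G -> b \in G -> coll a b
   (gcdn (gcdn x y) (exponent G), 0, gcdn z2 (exponent [~: G, G])) =
   weval a b (wW (gcdn (gcdn x y) (exponent G)) (gcdn z2 (exponent [~: G, G]))).
  move=> aG bG.
  rewrite /= !weval_pow (comm_paper cG) ?groupX // (commgXn cG) //.
  by rewrite /coll /= expg0 mulg1.
apply/setP => g; apply/imset2P/imset2P => -[a b aG bG ->]; exists a b => //.
  exact: P.
by rewrite P.
Qed.
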